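(* Let $\nu$ be an ergodic $S$-invariant probability measure on $X_\eta$ different from the Dirac measure at the all-zero sequence, and let $k\ge1$. Let $R_k$ denote the rotation $z\mapsto z+1$ on $\mathbb Z/b_k\mathbb Z$ with uniform measure. Then $(S,X_\eta,\nu)$ is not disjoint from $R_k$ (i.e. they admit a joining other than the product measure).
   Context: Let $S$ be the shift on $\{0,1\}^{\mathbb Z}$, $(Sx)(n)=x(n+1)$. Let $\mathscr{B}=\{b_1,b_2,\dots\}\subset\{2,3,\dots\}$ with $\gcd(b_i,b_j)=1$ for $i\ne j$ and $\sum_i1/b_i<\infty$. Define $\eta(n)=1$ iff $b_i\nmid n$ for all $i$ (else $0$), and let $X_\eta$ be the set of $y\in\{0,1\}^{\mathbb Z}$ all of whose finite blocks occur in $\eta$. Two measure-preserving systems are disjoint if the product measure is their only joining (invariant measure on the product with the given marginals). *)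

(* Defs.v *)
From HB Require Import structures.
From mathcomp Require Import all_boot all_order all_algebra.
From mathcomp Require Import all_classical all_reals all_analysis.
Set Implicit Arguments. Unset Strict Implicit. Unset Printing Implicit Defensive.
Import Order.TTheory GRing.Theory Num.Theory.
Local Open Scope classical_set_scope.
Local Open Scope ring_scope.

(** Configurations x : Z -> {0,1} (booleans, true = 1). *)
Definition bf_config := int -> bool.

(** Cylinder sets [x n = c]; they generate the product (Borel) sigma-algebra. *)
Definition bf_cylinders : set (set bf_config) :=
  [set A | exists (n : int) (c : bool), A = [set x | x n = c]].

Definition Cfg := g_sigma_algebraType bf_cylinders.

Definition bf_shift (x : Cfg) : Cfg := fun n => x (n + 1).

Definition bf_eta (b : nat -> nat) (n : int) : bool :=
  `[< forall i : nat, ~~ (b i %| `|n|%N)%N >].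

Definition bf_Xeta (b : nat -> nat) : set Cfg :=
  [set y | forall (m : int) (l : nat), exists t : int,
      forall j : nat, (j < l)%N -> y (m + j%:Z) = bf_eta b (t + j%:Z)].

(** Z/bZ (meaningful for b >= 2) with the discrete sigma-algebra. *)
Definition Zm (b : nat) : Type := 'Z_b.
HB.instance Definition _ (b : nat) := GRing.ComNzRing.copy (Zm b) 'Z_b.
HB.instance Definition _ (b : nat) := isPointed.Build (Zm b) 0%R.
HB.instance Definition _ (b : nat) := @isMeasurable.Build default_measure_display
  (Zm b) discrete_measurable (@discrete_measurable0 _)
  (@discrete_measurableC _) (@discrete_measurableU _).

Definition bf_rot (b : nat) (z : Zm b) : Zm b := (z + 1)%R.

Definition bf_unif (R : realType) (b : nat) (A : set (Zm b)) : \bar R :=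
  ((#|[set z : 'Z_b | `[< A z >]]|%:R / b%:R : R))%:E.

Section Systems.
Context {R : realType} {d1 d2 : measure_display}
  {T1 : measurableType d1} {T2 : measurableType d2}.

Definition m_invariant {d} {T : measurableType d} (mu : set T -> \bar R)
  (f : T -> T) : Prop :=
  forall A, measurable A -> mu (f @^-1` A) = mu A.

Definition m_ergodic {d} {T : measurableType d} (mu : set T -> \bar R)
  (f : T -> T) : Prop :=
  m_invariant mu f /\
  forall A, measurable A -> f @^-1` A = A -> mu A = 0%E \/ mu A = 1%E.

Definition m_joining (mu1 : set T1 -> \bar R) (f1 : T1 -> T1)
  (mu2 : set T2 -> \bar R) (f2 : T2 -> T2)
  (lam : probability (T1 * T2)%type R) : Prop :=
  [/\ forall A, measurable A -> lam (A `*` setT) = mu1 A,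
      forall B, measurable B -> lam (setT `*` B) = mu2 B &
      m_invariant lam (fun p => (f1 p.1, f2 p.2))].

Definition m_disjoint (mu1 : set T1 -> \bar R) (f1 : T1 -> T1)
  (mu2 : set T2 -> \bar R) (f2 : T2 -> T2) : Prop :=
  forall lam : probability (T1 * T2)%type R, m_joining mu1 f1 mu2 f2 lam ->
    forall C, measurable C -> lam C = (mu1 \x mu2)%E C.

End Systems.

(* Main.v *)
Require Import Defs.
From HB Require Import structures.
From mathcomp Require Import all_boot all_order all_algebra.
From mathcomp Require Import all_classical all_reals all_analysis.
From mathcomp Require Import zify.
Import Order.TTheory GRing.Theory Num.Theory numFieldNormedType.Exports.
Local Open Scope classical_set_scope.
Local Open Scope ring_scope.
Section Arith.
Variable b : nat.
Hypothesis hb : (1 < b)%N.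

Lemma natZb0 (m : nat) : ((m%:R : 'Z_b) == 0) = (b %| m)%N.
Proof.
by rewrite -(inj_eq val_inj) /= val_Zp_nat.
Qed.

Lemma intZb0 (n : int) : ((n%:~R : 'Z_b) == 0) = (b %| `|n|)%N.
Proof.
case: n => m; first by rewrite -pmulrn natZb0.
by rewrite NegzE mulrNz oppr_eq0 -pmulrn natZb0.
Qed.

Lemma bZb0 : (b%:R : 'Z_b) = 0.
Proof. exact: pchar_Zp. Qed.

Lemma natZbE (m n : nat) : ((m%:R : 'Z_b) = n%:R) <-> (m %% b = n %% b)%N.
Proof.
split => [h|h]; first by rewrite -!val_Zp_nat // h.
by apply: val_inj; rewrite /= !val_Zp_nat.
Qed.

Lemma natr_val (z : 'Z_b) : (val z)%:R = z.
Proof. apply: val_inj; rewrite /= val_Zp_nat // modn_small //.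
by case: z => /= z; rewrite Zp_cast.
Qed.
Lemma valZbS (z : 'Z_b) : val (z + 1)%R = ((val z + 1) %% b)%N.
Proof.
have -> : z + 1 = (val z + 1)%:R.
  by rewrite natrD natr_val.
exact: val_Zp_nat.
Qed.

End Arith.

Definition shiftn (n : nat) (x : Cfg) : Cfg := fun m => x (m + n%:Z).
Definition zres (b : nat) (x : Cfg) (r : 'Z_b) : bool :=
  `[< forall n : int, (n%:~R : 'Z_b) = r -> x n = false >].
Arguments zres {b}.
Definition zvec (b : nat) (x : Cfg) : {ffun 'Z_b -> bool} := [ffun r => zres x r].
Definition gsel (b : nat) (u : {ffun 'Z_b -> bool}) : 'Z_b :=
  if [pick r | u r] is Some r then - r else 0.
Arguments gsel {b}.
Definition phi (b : nat) (x : Cfg) : 'Z_b := gsel (zvec b x).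

Lemma cyl_meas (n : int) (c : bool) : measurable [set x : Cfg | x n = c].
Proof. by apply: sub_sigma_algebra; exists n, c. Qed.

Lemma condcyl_meas (P : Prop) (n : int) (c : bool) :
  measurable [set x : Cfg | P -> x n = c].
Proof.
have [p|np] := pselect P.
  rewrite (_ : [set x | _] = [set x : Cfg | x n = c]); first exact: cyl_meas.
  by apply/seteqP; split => x /=; [apply| move=> h _].
rewrite (_ : [set x | _] = setT) //.
by apply/seteqP; split => x //= _ /np.
Qed.

Lemma intcap_meas (F : int -> set Cfg) : (forall n, measurable (F n)) ->
  measurable [set x | forall n, F n x].
Proof.
move=> mF.
rewrite (_ : [set x | _] = \bigcap_k (F k%:Z `&` F (- k%:Z))).
  by apply: bigcapT_measurable => k; apply: measurableI.
apply/seteqP; split => x /=.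
  by move=> h k _; split; apply: h.
move=> h [] k; first by case: (h k I).
by rewrite NegzE; case: (h k.+1 I).
Qed.

Lemma intcup_meas (F : int -> set Cfg) : (forall n, measurable (F n)) ->
  measurable [set x | exists n, F n x].
Proof.
move=> mF.
rewrite (_ : [set x | _] = \bigcup_k (F k%:Z `|` F (- k%:Z))).
  by apply: bigcupT_measurable => k; apply: measurableU.
apply/seteqP; split => x /=.
  case=> [] [] k h; first by exists k => //; left.
  by exists k.+1 => //; right; rewrite -NegzE.
by case=> k _ [h|h]; [exists k%:Z | exists (- k%:Z)].
Qed.

Lemma zres_meas (b : nat) (r : 'Z_b) : measurable [set x : Cfg | zres x r].
Proof.
rewrite (_ : [set x | _] = [set x | forall n : int,
   [set x : Cfg | ((n%:~R : 'Z_b) = r) -> x n = false] x]).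
  by apply: intcap_meas => n; apply: condcyl_meas.
by apply/seteqP; split => x /=; rewrite /zres asboolE.
Qed.

Lemma phi_meas (b : nat) (B : set 'Z_b) : measurable (phi b @^-1` B).
Proof.
rewrite (_ : _ @^-1` _ = \bigcup_(u in [set u | B (gsel u)])
   \bigcap_(r in [set: 'Z_b]) [set x : Cfg | zres x r = u r]).
  apply: fin_bigcup_measurable; first exact: finite_finset.
  move=> u _; apply: fin_bigcap_measurable; first exact: finite_finset.
  move=> r _; case: (u r).
    exact: zres_meas.
  rewrite (_ : [set x | _] = ~` [set x | zres x r]).
    by apply: measurableC; apply: zres_meas.
  by apply/seteqP; split => x /=; case: (zres x r).
apply/seteqP; split => x /=.
  move=> h; exists (zvec b x) => //= r _; by rewrite /zvec ffunE.
case=> u /= hu hx; suff e : zvec b x = u by rewrite /phi e.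
by apply/ffunP => r; rewrite ffunE; apply: hx.
Qed.

Lemma shiftn_meas (n : nat) : measurable_fun setT (shiftn n).
Proof.
have h : @measurable _ Cfg = <<s bf_cylinders >> by [].
apply: (measurability _ h).
move=> _ [B [m [c ->]] <-]; rewrite setTI.
exact: (cyl_meas (m + n%:Z) c).
Qed.

Definition Fmap (b : nat) (n : nat) (x : Cfg) : (Cfg * Zm b)%type :=
  (shiftn n x, phi b x + n%:R).

Lemma Fmap_meas (b n : nat) : measurable_fun setT (Fmap b n).
Proof.
apply: measurable_fun_pair; first exact: shiftn_meas.
move=> _ B _; rewrite setTI.
have := @phi_meas b [set w : 'Z_b | B (w + n%:R)].
by congr (measurable _).
Qed.

Lemma Fpre_meas (b n : nat) (C : set (Cfg * Zm b)%type) :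
  measurable C -> measurable (Fmap b n @^-1` C).
Proof. by move=> mC; rewrite -(setTI (_ @^-1` _)); apply: Fmap_meas. Qed.

Section Lam.
Variables (R : realType) (b : nat) (nu : probability Cfg R).

Definition lamf (C : set (Cfg * Zm b)%type) : \bar R :=
  \sum_(z : 'Z_b) ((b%:R^-1)%:E * nu (Fmap b (val z) @^-1` C))%E.

Let lam0 : lamf set0 = 0%E.
Proof. by rewrite /lamf big1 // => z _; rewrite preimage_set0 measure0 mule0. Qed.

Let lam_ge0 C : (0 <= lamf C)%E.
Proof.
by rewrite /lamf; apply: sume_ge0 => z _; apply: mule_ge0 => //; rewrite lee_fin invr_ge0.
Qed.

Let lam_sigma_additive : semi_sigma_additive lamf.
Proof.
move=> F mF tF mUF; rewrite [X in _ --> X](_ : _ =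
    lim ((fun n => \sum_(0 <= i < n) lamf (F i)) @ \oo)).
  by apply: is_cvg_ereal_nneg_natsum => k _; exact: lam_ge0.
rewrite nneseries_sum; last by move=> z j _; apply: mule_ge0 => //; rewrite lee_fin invr_ge0.
apply: eq_bigr => /= z _.
rewrite nneseriesZl //.
congr (_ * _)%E.
rewrite preimage_bigcup measure_semi_bigcup //.
- by move=> i; apply: Fpre_meas.
- apply/trivIsetP => /= i j _ _ ij; rewrite -preimage_setI.
  by move/trivIsetP : tF => /(_ _ _ _ _ ij) ->//; rewrite preimage_set0.
- by rewrite -preimage_bigcup; apply: Fpre_meas.
Qed.

HB.instance Definition _ := isMeasure.Build _ _ _ lamf
  lam0 lam_ge0 lam_sigma_additive.

End Lam.

Lemma shiftnS (n : nat) (x : Cfg) : shiftn n.+1 x = shiftn n (bf_shift x).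
Proof.
apply/funext => m; rewrite /shiftn /bf_shift -addrA; congr (x (m + _)).
by rewrite -addn1 PoszD.
Qed.

Lemma shiftn0 (x : Cfg) : shiftn 0 x = x.
Proof. by apply/funext => m; rewrite /shiftn addr0. Qed.

Lemma nu_shiftn (R : realType) (nu : probability Cfg R) :
  m_invariant nu bf_shift -> forall n A, measurable A ->
  nu (shiftn n @^-1` A) = nu A.
Proof.
move=> hinv; elim=> [|n IH] A mA.
  by congr (nu _); apply/seteqP; split => x /=; rewrite shiftn0.
rewrite (_ : _ @^-1` _ = bf_shift @^-1` (shiftn n @^-1` A)).
  rewrite hinv ?IH //.
  by rewrite -(setTI (_ @^-1` _)); apply: shiftn_meas.
by apply/seteqP; split => x /=; rewrite shiftnS.
Qed.


Lemma nu_phi_sum (R : realType) (b : nat) (nu : probability Cfg R) (S : set 'Z_b) :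
  nu (phi b @^-1` S) =
  \sum_(w : 'Z_b) (if `[< S w >] then nu (phi b @^-1` [set w]) else 0%E).
Proof.
pose F (w : 'Z_b) := if `[< S w >] then phi b @^-1` [set w] else set0.
have -> : phi b @^-1` S = \bigcup_(w in [set: 'Z_b]) F w.
  apply/seteqP; split => x /=.
    move=> Sx; exists (phi b x) => //; rewrite /F.
    by case: asboolP.
  case=> w _; rewrite /F; case: asboolP => // Sw /= ->.
  exact: Sw.
rewrite measure_fin_bigcup //.
- rewrite (@fsbigE _ _ _ _ _ (enum 'Z_b)) ?enum_uniq //.
  + rewrite (eq_bigl xpredT); last by move=> i; rewrite in_setT.
    rewrite big_enum /=; apply: eq_bigr => w _; rewrite /F.
    by case: asboolP => //; rewrite measure0.
  + by move=> i _ /negP[]; rewrite mem_enum.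
  + exact: (@finite_finset 'Z_b setT).
- apply/trivIsetP => i j _ _ ij; rewrite /F.
  case: asboolP => _; last by rewrite set0I.
  case: asboolP => _; last by rewrite setI0.
  apply/seteqP; split => x //= [e1 e2]; move/eqP: ij; apply; congruence.
- move=> w _; rewrite /F; case: asboolP => _ //.
  exact: phi_meas.
Qed.

Lemma cardZb (b : nat) : (1 < b)%N -> #|'Z_b| = b.
Proof. by move=> hb; rewrite card_ord Zp_cast. Qed.

Lemma zvec_shiftb (b : nat) (hb : (1 < b)%N) (x : Cfg) : zvec b (shiftn b x) = zvec b x.
Proof.
apply/ffunP => r; rewrite !ffunE /zres.
apply/idP/idP => /asboolP h; apply/asboolP => n hn.
  have := h (n - b%:Z); rewrite /shiftn subrK; apply.
  by rewrite intrB -pmulrn bZb0 // subr0.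
have := h (n + b%:Z); rewrite /shiftn; apply.
by rewrite intrD -pmulrn bZb0 // addr0.
Qed.

Lemma phi_shiftb (b : nat) (hb : (1 < b)%N) (x : Cfg) : phi b (shiftn b x) = phi b x.
Proof. by rewrite /phi zvec_shiftb. Qed.

Lemma shiftnD (m n : nat) (x : Cfg) : shiftn m (shiftn n x) = shiftn (m + n) x.
Proof. by apply/funext => k; rewrite /shiftn -addrA PoszD. Qed.

Section LamProps.
Variables (R : realType) (b : nat) (hb : (1 < b)%N) (nu : probability Cfg R)
  (hinv : m_invariant nu bf_shift).

Let c : R := b%:R^-1.

Lemma c_ge0 : (0 <= c%:E)%E.
Proof. by rewrite lee_fin invr_ge0. Qed.

Lemma sum_c : (\sum_(z : 'Z_b) c%:E = 1)%E.
Proof.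
rewrite sumEFin sumr_const cardZb // -mulr_natr mulVf //.
by rewrite pnatr_eq0 -lt0n (ltnW hb).
Qed.

Lemma lam_marg1 A : measurable A -> lamf R b nu (A `*` setT) = nu A.
Proof.
move=> mA; rewrite /lamf.
transitivity (\sum_(z : 'Z_b) (c%:E * nu A))%E.
  apply: eq_bigr => z _; congr (_ * _)%E.
  rewrite -(@nu_shiftn R nu hinv (val z) A mA); congr (nu _).
  by apply/seteqP; split => x /=; [case | move=> h; split].
by rewrite -ge0_sume_distrl; [rewrite sum_c mul1e | move=> *; exact: c_ge0].
Qed.

Lemma lam_marg2 (B : set (Zm b)) : lamf R b nu (setT `*` B) = bf_unif R B.
Proof.
pose p (w : 'Z_b) := nu (phi b @^-1` [set w]).
have p0 w : (0 <= p w)%E by [].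
rewrite /lamf.
transitivity (\sum_(z : 'Z_b) (c%:E *
   \sum_(w : 'Z_b) (if `[< B (w + z)%R >] then p w else 0%E)))%E.
  apply: eq_bigr => z _; congr (_ * _)%E.
  rewrite -(@nu_phi_sum R b nu [set w | B (w + z)]); congr (nu _).
  apply/seteqP; split => x /=; [case=> _ | move=> h; split => //];
    by rewrite /Fmap /= natr_val.
rewrite -ge0_sume_distrr; last by move=> z _; apply: sume_ge0 => w _; case: ifP.
rewrite exchange_big /=.
transitivity (c%:E * \sum_(w : 'Z_b) \sum_(z : 'Z_b)
   (if `[< B z >] then p w else 0%E))%E.
  congr (_ * _)%E; apply: eq_bigr => w _.
  by rewrite [RHS](reindex_inj (addrI w)).
rewrite exchange_big /=.
transitivity (c%:E * \sum_(z : 'Z_b) (if `[< B z >] then 1 else 0))%E.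
  congr (_ * _)%E; apply: eq_bigr => z _.
  case: ifP => _; last by rewrite big1.
  have := @nu_phi_sum R b nu setT.
  rewrite preimage_setT probability_setT => ->.
  by apply: eq_bigr => w _; rewrite asboolT.
rewrite /bf_unif -big_mkcond /= sumEFin -EFinM; congr (_%:E).
rewrite sumr_const mulrC; congr (_ * _).
congr (_%:R); by apply: eq_card => z; rewrite !unfold_in /in_set /= asboolb.
Qed.

Definition Tmap (p : (Cfg * Zm b)%type) : (Cfg * Zm b)%type :=
  (bf_shift p.1, bf_rot p.2).

Lemma TF n x : Tmap (Fmap b n x) = Fmap b n.+1 x.
Proof.
rewrite /Tmap /Fmap /=; congr (_, _).
  apply/funext => m; rewrite /bf_shift /shiftn -addrA; congr (x (m + _)).
by rewrite /bf_rot -addrA natr1.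
Qed.

Lemma G_per (C : set (Cfg * Zm b)%type) : measurable C -> forall n,
  nu (Fmap b (n + b) @^-1` C) = nu (Fmap b n @^-1` C).
Proof.
move=> mC n.
rewrite -(@nu_shiftn R nu hinv b _ (Fpre_meas b n C mC)); congr (nu _).
apply/seteqP; split => x /=;
  by rewrite /Fmap shiftnD phi_shiftb // natrD bZb0 // addr0.
Qed.

Lemma G_mod (C : set (Cfg * Zm b)%type) : measurable C -> forall n,
  nu (Fmap b n @^-1` C) = nu (Fmap b (n %% b)%N @^-1` C).
Proof.
move=> mC n; rewrite {1}(div.divn_eq n b); elim: (n %/ b)%N => [|q IH].
  by rewrite mul0n add0n.
by rewrite mulSn -addnA [(b + _)%N]addnC G_per.
Qed.

Lemma lam_inv (C : set (Cfg * Zm b)%type) : measurable C ->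
  lamf R b nu (Tmap @^-1` C) = lamf R b nu C.
Proof.
move=> mC; rewrite /lamf.
transitivity (\sum_(z : 'Z_b) (c%:E * nu (Fmap b (val (z + 1)%R) @^-1` C)))%E.
  apply: eq_bigr => z _; congr (_ * _)%E.
  rewrite valZbS // -G_mod //; congr (nu _).
  by apply/seteqP; split => x /=; rewrite TF addn1.
by rewrite [RHS](reindex_inj (addIr 1)).
Qed.

End LamProps.

Lemma Xeta_sub (bs : nat -> nat) (k : nat) (hb : (1 < bs k)%N) (x : Cfg) :
  bf_Xeta bs x -> exists r : 'Z_(bs k), zres x r.
Proof.
move=> hx; apply: contrapT => hE.
have h1 : forall r : 'Z_(bs k), exists n : int,
    ((n%:~R : 'Z_(bs k)) = r) /\ x n = true.
  move=> r; apply: contrapT => hn; apply: hE; exists r; apply/asboolP => n hr.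
  by apply/negbTE/negP => xn; apply: hn; exists n.
have [nr hnr] := choice h1.
pose N := (\max_(r : 'Z_(bs k)) `|nr r|)%N.
have hN r : (`|nr r| <= N)%N by apply: (leq_bigmax r).
have [t ht] := hx (- N%:Z) (2 * N).+1.
pose r0 : 'Z_(bs k) := ((- N%:Z - t)%:~R).
have [e0 x0] := hnr r0.
have hn0 := hN r0.
move: e0 x0 hn0; set n0 := nr r0 => e0 x0 hn0.
pose j : nat := absz (n0 + N%:Z).
have hj : (j < (2 * N).+1)%N by rewrite /j; lia.
have hmj : (- N%:Z + j%:Z = n0 :> int)%R by rewrite /j; lia.
have := ht j hj; rewrite hmj x0 /bf_eta.
case: asboolP => // hall _.
have := hall k; apply/negP/negPn.
rewrite -intZb0 //.
have e : (t + j%:Z = n0 - (- N%:Z - t) :> int)%R by rewrite /j; lia.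
by rewrite e intrB e0 subrr.
Qed.

Lemma natcap_meas (F : nat -> set Cfg) : (forall n, measurable (F n)) ->
  measurable [set x | forall n, F n x].
Proof.
move=> mF; rewrite (_ : [set x | _] = \bigcap_k F k).
  exact: bigcapT_measurable.
by apply/seteqP; split => x /= h n //; apply: h.
Qed.

Lemma Xeta_meas (bs : nat -> nat) : measurable (bf_Xeta bs).
Proof.
apply: (intcap_meas (fun m => [set y : Cfg | forall l : nat, exists t : int,
      forall j : nat, (j < l)%N -> y (m + j%:Z) = bf_eta bs (t + j%:Z)])) => m.
apply: (natcap_meas (fun l => [set y : Cfg | exists t : int,
      forall j : nat, (j < l)%N -> y (m + j%:Z) = bf_eta bs (t + j%:Z)])) => l.
apply: (intcup_meas (fun t => [set y : Cfg |
      forall j : nat, (j < l)%N -> y (m + j%:Z) = bf_eta bs (t + j%:Z)])) => t.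
apply: (natcap_meas (fun j => [set y : Cfg |
      (j < l)%N -> y (m + j%:Z) = bf_eta bs (t + j%:Z)])) => j.
exact: condcyl_meas.
Qed.

Definition D0 : set Cfg := [set x : Cfg | x 0 = true].

Lemma nuD_pos (R : realType) (nu : probability Cfg R)
  (hinv : m_invariant nu bf_shift)
  (hdirac : exists A : set Cfg, measurable A /\
              nu A <> @dirac _ Cfg (fun _ : int => false) R A) :
  (0 < nu D0)%E.
Proof.
rewrite lt0e measure_ge0 andbT; apply/negP => /eqP h0.
have hn n : nu [set x : Cfg | x n = true] = 0%E.
  case: n => [m|m].
    rewrite -h0 -(@nu_shiftn R nu hinv m _ (cyl_meas 0 true)).
    by congr (nu _); apply/funext => x; rewrite /shiftn /= add0r.
  rewrite -h0 -(@nu_shiftn R nu hinv m.+1 _ (cyl_meas (Negz m) true)).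
  by congr (nu _); apply/funext => x; rewrite /shiftn /D0 /= NegzE addNr.
pose N := [set x : Cfg | exists n, x n = true].
have mN : measurable N by apply: (intcup_meas (fun n => [set x : Cfg | x n = true])) => n; apply: cyl_meas.
pose A k := [set x : Cfg | x k%:Z = true] `|` [set x : Cfg | x (- k%:Z) = true].
have mA k : measurable (A k) by apply: measurableU; apply: cyl_meas.
have NA : N `<=` \bigcup_k A k.
  move=> x [[] k h]; first by exists k => //; left.
  by exists k.+1 => //; right; rewrite -NegzE.
have nuN : nu N = 0%E.
  apply/eqP; rewrite -measure_le0.
  apply: (le_trans (measure_sigma_subadditive nu mA mN NA)).
  rewrite eseries0 // => i _ _; apply/eqP; rewrite -measure_le0.
  apply: (le_trans (measureU2 nu (cyl_meas _ _) (cyl_meas _ _))).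
  have h1 := hn i%:Z; have h2 := hn (- i%:Z).
  have e1 : (nu [set x : Cfg | x i%:Z = true] <= 0)%E by rewrite h1.
  have e2 : (nu [set x : Cfg | x (- i%:Z)%R = true] <= 0)%E by rewrite h2.
  by have := leeD e1 e2; rewrite adde0.
have subN (B : set Cfg) : ~ B (fun _ => false) -> B `<=` N.
  move=> nB x Bx; apply: contrapT => hx; apply: nB.
  suff <- : x = (fun _ => false) by [].
  apply/funext => n; apply/negbTE/negP => xn; apply: hx; exists n.
  exact/idP.
have [B [mB hB]] := hdirac; apply: hB; rewrite diracE.
have [Bx0|nBx0] := pselect (B (fun _ => false)).
  rewrite mem_set //.
  have hC : nu (~` B) = 0%E.
    apply/eqP; rewrite -measure_le0 -nuN; apply: le_measure; rewrite ?inE //.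
    - exact: measurableC.
    - by apply: subN => /=; apply.
  rewrite -(probability_setT nu) -(setUCr B) measureU //.
  - by rewrite -[LHS]adde0; congr (_ + _)%E; apply/esym; exact: hC.
  - exact: measurableC.
  - by rewrite setICr.
rewrite memNset //.
apply/eqP; rewrite -measure_le0 -nuN; apply: le_measure; rewrite ?inE //.
exact: subN.
Qed.

Theorem mainTheorem9 (R : realType) (b : nat -> nat)
  (hb2 : forall i, (2 <= b i)%N)
  (hcop : forall i j, i <> j -> coprime (b i) (b j))
  (hsum : cvgn (series (fun i => ((b i)%:R^-1 : R))))
  (nu : probability Cfg R)
  (hsupp : nu (bf_Xeta b) = 1%E)
  (herg : m_ergodic nu bf_shift)
  (hdirac : exists A : set Cfg, measurable A /\
              nu A <> @dirac _ Cfg (fun _ : int => false) R A)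
  (k : nat) :
  ~ m_disjoint nu bf_shift (@bf_unif R (b k)) (@bf_rot (b k)).
Proof.
move=> hdisj.
have hb : (1 < b k)%N by apply: hb2.
have hinv := herg.1.
pose P0 := @dirac _ (Cfg * Zm (b k))%type ((fun _ : int => false), (0 : Zm (b k))) R.
pose lam := mnormalize (lamf R (b k) nu) P0.
have h1 : lamf R (b k) nu setT = 1%E.
  by rewrite -setXTT (@lam_marg1 R (b k) hb nu hinv) // probability_setT.
have lamE C : lam C = lamf R (b k) nu C.
  rewrite /lam /mnormalize /=.
  have h1' : lamf R (b k) nu [set: g_sigma_algebraType bf_cylinders * Zm (b k)] = 1%E := h1.
  rewrite h1' /=.
  case: ifPn => [/orP[/eqP h|/eqP h]|_]; last by rewrite invr1 mule1.
    by move: h => /eqP; rewrite eqe oner_eq0.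
  by [].
have hjoin : m_joining nu bf_shift (@bf_unif R (b k)) (@bf_rot (b k)) lam.
  split.
  - move=> A mA; apply: (eq_trans (lamE _)); exact: (@lam_marg1 R (b k) hb nu hinv).
  - move=> B mB; apply: (eq_trans (lamE _)); exact: (@lam_marg2 R (b k) hb nu).
  - move=> C mC; apply: (eq_trans (lamE _)); apply: (eq_trans _ (esym (lamE _))).
    exact: (@lam_inv R (b k) hb nu hinv).
pose C0 : set (Cfg * Zm (b k))%type := D0 `*` [set (0 : Zm (b k))].
have mC0 : measurable C0 by apply: measurableX => //; apply: cyl_meas.
have := hdisj lam hjoin C0 mC0.
move/(eq_trans (esym (lamE C0))).
have lamC0 : lamf R (b k) nu C0 = 0%E.
  rewrite /lamf big1 // => z _.
  suff -> : nu (Fmap (b k) (val z) @^-1` C0) = 0%E by rewrite mule0.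
  apply/eqP; rewrite -measure_le0.
  have hX : nu (~` bf_Xeta b) = 0%E.
    rewrite probability_setC; last exact: Xeta_meas.
    rewrite [X in (1 - X)%E](_ : _ = 1%E) ?subee //; exact: hsupp.
  suff hle : (nu (Fmap (b k) (val z) @^-1` C0) <= nu (~` bf_Xeta b))%E.
    by move: hle; rewrite hX.
  apply: le_measure; rewrite ?inE.
  - exact: Fpre_meas.
  - by apply: measurableC; exact: Xeta_meas.
  move=> x [/= h1x h2x] hX'.
  have [r hr] := Xeta_sub b k hb x hX'.
  move: h2x; rewrite /phi /gsel; case: pickP => [r' | hnone].
    rewrite ffunE => hr' e.
    have er : ((val z)%:R : 'Z_(b k)) = r'.
      by move: e => /= /eqP; rewrite addrC subr_eq0 => /eqP.
    move/asboolP: hr' => /(_ (val z)%:Z) hz.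
    move: hz; rewrite -pmulrn er => /(_ erefl).
    by move: h1x; rewrite /D0 /shiftn /= add0r => ->.
  by have := hnone r; rewrite ffunE hr.
have prodC0 : ((nu \x @bf_unif R (b k)) C0 = ((b k)%:R^-1)%:E * nu D0)%E.
  rewrite /product_measure1.
  rewrite (_ : (bf_unif R (b:=b k) \o xsection C0) =
     (cst ((b k)%:R^-1)%:E) \_ D0); last first.
    apply/funext => x; rewrite patchE /=.
    have [Dx|nDx] := pselect (D0 x).
      rewrite mem_set // /bf_unif.
      rewrite (_ : #|_| = 1%N) ?mul1r //.
      rewrite -(card1 (0 : 'Z_(b k))); apply: eq_card => z.
      rewrite !unfold_in /in_set /= /xsection /=.
      rewrite !asboolb; apply/idP/eqP => [/set_mem [_ e] // | ->].
      by apply/mem_set; split.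
    rewrite memNset // /bf_unif.
    rewrite (_ : #|_| = 0%N) ?mul0r //.
    apply: eq_card0 => z.
    rewrite !unfold_in /in_set /= /xsection /=.
    by rewrite !asboolb; apply/negbTE/negP => /set_mem [].
  by rewrite -integral_mkcond integral_cst //; apply: cyl_meas.
move=> e.
have hD := @nuD_pos R nu hinv hdirac.
have cpos : (0 < ((b k)%:R^-1)%:E :> \bar R)%E.
  by rewrite lte_fin invr_gt0 ltr0n (ltnW hb).
have := mule_gt0 cpos hD.
by rewrite -prodC0 -e lamC0 ltxx.
Qed.
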